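(* There exist a function $g:\mathbb{N}\to\mathbb{R}$ with $g(n)=o(n)$ and, for every $n\ge 1$, an injective map from the set of Left-Leaning AVL trees with $n$ nodes to the set of finite binary strings such that every codeword has length at most $0.5912\,n+g(n)$. In words: there is an encoding of Left-Leaning AVL trees using at most $0.5912n+o(n)$ bits for Left-Leaning AVL trees with $n$ nodes.
   Context: A binary tree is a rooted tree in which every node has an (optional) left child and an (optional) right child. The height of a tree is the number of edges on a longest path from the root to a leaf; the empty tree has height $-1$. An AVL tree is a binary tree such that at every node the heights of the left and right subtrees differ by at most $1$ (empty subtrees included). A Left-Leaning AVL tree is an AVL tree in which, at every node, the height of the left subtree is at least the height of the right subtree. *)

(* Defs.v *)
From Stdlib Require Import Reals ZArith List.

Inductive tree : Type :=
| Leaf : tree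
| Node : tree -> tree -> tree.

Fixpoint nodes (t : tree) : nat :=
  match t with
  | Leaf => 0
  | Node l r => S (nodes l + nodes r)
  end.

Fixpoint height (t : tree) : Z :=
  match t with
  | Leaf => (-1)%Z
  | Node l r => (1 + Z.max (height l) (height r))%Z
  end.

Fixpoint is_AVL (t : tree) : Prop :=
  match t with
  | Leaf => True
  | Node l r => (Z.abs (height l - height r) <= 1)%Z /\ is_AVL l /\ is_AVL r
  end.

Fixpoint left_leaning (t : tree) : Prop :=
  match t with
  | Leaf => True
  | Node l r => (height r <= height l)%Z /\ left_leaning l /\ left_leaning r
  end.

Definition is_LLAVL (t : tree) : Prop := is_AVL t /\ left_leaning t.

Definition LLAVL_n (n : nat) : Type := { t : tree | is_LLAVL t /\ nodes t = n }.

Definition little_o_n (g : nat -> R) : Prop :=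
  forall eps : R, (0 < eps)%R ->
    exists N : nat, forall n : nat, (N <= n)%nat -> (Rabs (g n) <= eps * INR n)%R.

(* Main.v *)
Require Import Defs.
From Stdlib Require Import Reals ZArith List Lia Lra.
From Stdlib Require Import ProofIrrelevance.
Import ListNotations.
Open Scope R_scope.

Definition y : R := 2/3.

Fixpoint gen (k : nat) : list tree :=
  match k with
  | O => [Leaf]
  | S k' => flat_map (fun l => map (Node l) (gen k' ++ match k' with O => [] | S k'' => gen k'' end)) (gen k')
  end.

Fixpoint w (k : nat) : R :=
  match k with
  | O => 1
  | S k' => y * w k' * (w k' + match k' with O => 0 | S k'' => w k'' end)
  end.

Definition W (l : list tree) : R := fold_right (fun t a => y ^ nodes t + a) 0 l.

Lemma y_pos : 0 < y. Proof. unfold y; lra. Qed.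

Lemma W_app a b : W (a ++ b) = W a + W b.
Proof. induction a; simpl; [lra|]. unfold W in *; simpl; rewrite IHa; lra. Qed.

Lemma W_map l R0 : W (map (Node l) R0) = y * y ^ nodes l * W R0.
Proof.
  induction R0; simpl; [unfold W; simpl; lra|].
  unfold W in *; simpl. rewrite IHR0. rewrite pow_add. ring.
Qed.

Lemma W_flat L R0 : W (flat_map (fun l => map (Node l) R0) L) = y * W L * W R0.
Proof.
  induction L; simpl; [unfold W; simpl; lra|].
  rewrite W_app, W_map, IHL. unfold W; simpl. ring.
Qed.

Lemma W_gen k : W (gen k) = w k /\ W (gen (S k)) = w (S k).
Proof.
  induction k.
  - split; [unfold W; simpl; lra|].
    change (gen 1) with (flat_map (fun l => map (Node l) (gen 0 ++ [])) (gen 0)).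
    rewrite W_flat, W_app. simpl. unfold W; simpl. ring.
  - destruct IHk as [H1 H2]. split; auto.
    change (gen (S (S k))) with (flat_map (fun l => map (Node l) (gen (S k) ++ gen k)) (gen (S k))).
    rewrite W_flat, W_app, H1, H2. reflexivity.
Qed.

Lemma w_SS k : w (S (S k)) = y * w (S k) * (w (S k) + w k).
Proof. reflexivity. Qed.

Lemma w_nonneg k : 0 <= w k /\ 0 <= w (S k).
Proof.
  induction k.
  - simpl. unfold y. lra.
  - destruct IHk. split; auto. rewrite w_SS.
    pose proof y_pos. apply Rmult_le_pos; [apply Rmult_le_pos|]; lra.
Qed.

Lemma step a b A B : 0 <= a <= A -> 0 <= b <= B -> y * a * (a + b) <= y * A * (A + B).
Proof. intros. pose proof y_pos. apply Rmult_le_compat; try nra. Qed.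



Lemma w0 : w 0 <= 1. Proof. simpl; lra. Qed.
Lemma w1 : w 1 <= 2/3. Proof. simpl; unfold y; lra. Qed.
Lemma stepk k A B C : w (S k) <= A -> w k <= B -> y * A * (A + B) <= C -> w (S (S k)) <= C.
Proof.
  intros HA HB HC. rewrite w_SS. eapply Rle_trans; [|exact HC].
  apply step; split; auto; apply w_nonneg.
Qed.
Lemma w2 : w 2 <= 463/625. Proof. eapply stepk; [apply w1|apply w0|unfold y; lra]. Qed.
Lemma w3 : w 3 <= 869/1250. Proof. eapply stepk; [apply w2|apply w1|unfold y; lra]. Qed.
Lemma w4 : w 4 <= 416/625. Proof. eapply stepk; [apply w3|apply w2|unfold y; lra]. Qed.
Lemma w5 : w 5 <= 6039/10000. Proof. eapply stepk; [apply w4|apply w3|unfold y; lra]. Qed.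
Lemma w6 : w 6 <= 639/1250. Proof. eapply stepk; [apply w5|apply w4|unfold y; lra]. Qed.
Lemma w7 : w 7 <= 3801/10000. Proof. eapply stepk; [apply w6|apply w5|unfold y; lra]. Qed.
Lemma w8 : w 8 <= 2259/10000. Proof. eapply stepk; [apply w7|apply w6|unfold y; lra]. Qed.
Lemma w9 : w 9 <= 913/10000. Proof. eapply stepk; [apply w8|apply w7|unfold y; lra]. Qed.

Fixpoint Ssum (m : nat) : R := match m with O => 0 | S m' => Ssum m' + w m' end.

Lemma tail j : w (8 + j) <= 3/8 /\ w (9 + j) <= 3/8 /\ Ssum (9 + j) + 2 * w (9 + j) <= 6.
Proof.
  induction j.
  - simpl Nat.add. pose proof w0; pose proof w1; pose proof w2; pose proof w3; pose proof w4;
    pose proof w5; pose proof w6; pose proof w7; pose proof w8; pose proof w9.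
    split; [lra|split; [lra|]]. cbn [Ssum Nat.add]. lra.
  - destruct IHj as [A [B C]].
    replace (8 + S j)%nat with (9 + j)%nat by lia.
    replace (9 + S j)%nat with (S (S (8 + j))) by lia.
    replace (9 + j)%nat with (S (8 + j)) in * by lia.
    pose proof (w_nonneg (8 + j)) as [N0 N1].
    assert (H : w (S (S (8 + j))) <= w (S (8 + j)) / 2).
    { rewrite w_SS. unfold y. nra. }
    pose proof (proj2 (w_nonneg (S (8+j)))).
    split; [lra|split; [lra|]]. cbn [Ssum] in *. lra.
Qed.

Lemma Ssum_mono m k : (m <= k)%nat -> Ssum m <= Ssum k.
Proof.
  induction 1; [lra|]. simpl. pose proof (proj1 (w_nonneg m0)). lra.
Qed.

Lemma Ssum_bound m : Ssum m <= 6.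
Proof.
  destruct (Nat.le_gt_cases m 9).
  - eapply Rle_trans; [apply Ssum_mono; eauto|]. pose proof (tail 0). simpl Nat.add in H0.
    pose proof (proj1 (w_nonneg 9)). lra.
  - destruct (tail (m - 9)) as [_ [_ C]]. replace (9 + (m - 9))%nat with m in C by lia.
    pose proof (proj1 (w_nonneg m)). lra.
Qed.

Lemma height_ge t : (-1 <= height t)%Z.
Proof. induction t as [|a IHa b IHb]; cbn [height]; [lia|]. pose proof (Z.le_max_l (height a) (height b)); pose proof (Z.le_max_r (height a) (height b)); pose proof (Z.max_spec (height a) (height b)); lia. Qed.

Lemma height_nodes t : (height t + 1 <= Z.of_nat (nodes t))%Z.
Proof. induction t as [|a IHa b IHb]; cbn [height nodes]; [lia|]. pose proof (Z.max_spec (height a) (height b)); rewrite Nat2Z.inj_succ, Nat2Z.inj_add; lia. Qed.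

Lemma gen_S k : gen (S k) = flat_map (fun l => map (Node l) (gen k ++ match k with O => [] | S k'' => gen k'' end)) (gen k).
Proof. reflexivity. Qed.

Lemma gen_complete t : is_LLAVL t -> In t (gen (Z.to_nat (height t + 1))).
Proof.
  induction t as [|l IHl r IHr]; intros [HA HL].
  - simpl. auto.
  - cbn [is_AVL left_leaning] in HA, HL. destruct HA as [Hd [Al Ar]]. destruct HL as [Hlr [Ll Lr]].
    specialize (IHl (conj Al Ll)). specialize (IHr (conj Ar Lr)).
    pose proof (height_ge l). pose proof (height_ge r).
    cbn [height].
    replace (Z.to_nat (1 + Z.max (height l) (height r) + 1)) with (S (Z.to_nat (height l + 1))) by lia.
    rewrite gen_S. apply in_flat_map. exists l. split; auto.
    apply in_map. apply in_app_iff.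
    destruct (Z.eq_dec (height l) (height r)) as [E|E].
    + left. rewrite E. auto.
    + right. replace (Z.to_nat (height l + 1)) with (S (Z.to_nat (height r + 1))) by lia. auto.
Qed.

Lemma W_flatgen m : W (flat_map gen (seq 0 m)) = Ssum m.
Proof.
  induction m; [reflexivity|].
  rewrite seq_S, flat_map_app, W_app, IHm. simpl. rewrite app_nil_r, (proj1 (W_gen m)). reflexivity.
Qed.

Lemma W_nonneg l : 0 <= W l.
Proof. induction l; unfold W in *; simpl; [lra|]. pose proof (pow_le y (nodes a) (Rlt_le _ _ y_pos)). lra. Qed.

Definition Ln (n : nat) : list tree := filter (fun t => Nat.eqb (nodes t) n) (flat_map gen (seq 0 (S n))).

Lemma W_filter n l : W (filter (fun t => Nat.eqb (nodes t) n) l) = INR (length (filter (fun t => Nat.eqb (nodes t) n) l)) * y ^ n /\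
   W (filter (fun t => Nat.eqb (nodes t) n) l) <= W l.
Proof.
  induction l as [|a l [IH1 IH2]]; [simpl; unfold W; simpl; lra|].
  cbn [filter]. destruct (Nat.eqb_spec (nodes a) n).
  - cbn [length]. rewrite S_INR. unfold W in *; cbn [fold_right]. subst. split; [rewrite IH1; ring|]. lra.
  - split; auto. unfold W in *; cbn [fold_right]. pose proof (pow_le y (nodes a) (Rlt_le _ _ y_pos)). lra.
Qed.

Lemma Ln_len n : INR (length (Ln n)) * y ^ n <= 6.
Proof.
  destruct (W_filter n (flat_map gen (seq 0 (S n)))) as [A B]. unfold Ln. rewrite <- A.
  rewrite W_flatgen in B. pose proof (Ssum_bound (S n)). lra.
Qed.

Lemma Ln_complete n t : is_LLAVL t -> nodes t = n -> In t (Ln n).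
Proof.
  intros H E. unfold Ln. apply filter_In. split; [|apply Nat.eqb_eq; auto].
  apply in_flat_map. exists (Z.to_nat (height t + 1)). split; [|apply gen_complete; auto].
  apply in_seq. pose proof (height_nodes t). pose proof (height_ge t). lia.
Qed.

Definition tree_eq_dec : forall a b : tree, {a = b} + {a <> b}.
Proof. decide equality. Defined.

Fixpoint idx (t : tree) (L : list tree) : nat :=
  match L with [] => O | x :: L' => if tree_eq_dec x t then O else S (idx t L') end.

Lemma idx_spec t L : In t L -> (idx t L < length L)%nat /\ nth (idx t L) L Leaf = t.
Proof.
  induction L; simpl; [tauto|]. intros H. destruct (tree_eq_dec a t); [split; [lia|auto]|].
  destruct H; [congruence|]. destruct (IHL H). split; [lia|auto].
Qed.

Fixpoint bits (l i : nat) : list bool :=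
  match l with O => [] | S l' => Nat.odd i :: bits l' (Nat.div2 i) end.

Lemma bits_len l i : length (bits l i) = l.
Proof. revert i; induction l; simpl; auto. Qed.

Lemma bits_inj l : forall i j, (i < 2 ^ l)%nat -> (j < 2 ^ l)%nat -> bits l i = bits l j -> i = j.
Proof.
  induction l; simpl; intros i j Hi Hj E; [lia|].
  injection E as E1 E2. pose proof (Nat.div2_odd i). pose proof (Nat.div2_odd j).
  set (P := (2 ^ l)%nat) in *.
  assert (Nat.div2 i = Nat.div2 j).
  { apply IHl; auto; destruct (Nat.odd i), (Nat.odd j); simpl in *; lia. }
  rewrite E1 in *. lia.
Qed.

Definition ell (n : nat) : nat := (10 * (n / 17 + 1) + 3)%nat.

Lemma small_check r : (r < 17)%nat -> (6 * 3 ^ Z.of_nat r <= 2 ^ (13 + Z.of_nat r))%Z.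
Proof.
  intros H.
  do 17 (destruct r as [|r]; [apply Z.leb_le; vm_compute; reflexivity|]). lia.
Qed.

Lemma zbound n : (6 * 3 ^ Z.of_nat n <= 2 ^ Z.of_nat (ell n) * 2 ^ Z.of_nat n)%Z.
Proof.
  unfold ell. pose proof (Nat.div_mod n 17 ltac:(lia)) as E. pose proof (Nat.mod_upper_bound n 17 ltac:(lia)).
  set (q := (n / 17)%nat) in *. set (r := (n mod 17)%nat) in *.
  rewrite <- Z.pow_add_r by lia.
  assert (Hn : Z.of_nat n = (17 * Z.of_nat q + Z.of_nat r)%Z) by lia.
  assert (He : (Z.of_nat (10 * (q + 1) + 3) + Z.of_nat n = 27 * Z.of_nat q + (13 + Z.of_nat r))%Z) by lia.
  rewrite He, Hn.
  rewrite !Z.pow_add_r by lia. rewrite !Z.pow_mul_r by lia.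
  pose proof (small_check r H).
  assert (HP : (0 <= (3 ^ 17) ^ Z.of_nat q <= (2 ^ 27) ^ Z.of_nat q)%Z).
  { split. apply Z.pow_nonneg; lia. apply Z.pow_le_mono_l. vm_compute. split; discriminate. }
  assert (0 <= 3 ^ Z.of_nat r)%Z by (apply Z.pow_nonneg; lia).
  rewrite Z.pow_add_r in H0 by lia. assert (0 <= 2 ^ 13 * 2 ^ Z.of_nat r)%Z by (apply Z.mul_nonneg_nonneg; apply Z.pow_nonneg; lia).
  nia.
Qed.

Lemma len_bound n : (length (Ln n) <= 2 ^ ell n)%nat.
Proof.
  pose proof (Ln_len n) as H.
  assert (H2 : INR (length (Ln n)) * 2 ^ n <= 6 * 3 ^ n).
  { replace (2 ^ n) with (y ^ n * 3 ^ n).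
    - pose proof (pow_lt 3 n ltac:(lra)). nra.
    - rewrite <- Rpow_mult_distr. unfold y. f_equal. lra. }
  rewrite INR_IZR_INZ in H2.
  replace 2 with (IZR 2) in H2 by reflexivity. replace 3 with (IZR 3) in H2 by reflexivity.
  replace 6 with (IZR 6) in H2 by reflexivity.
  rewrite !pow_IZR, <- !mult_IZR in H2. apply le_IZR in H2.
  pose proof (zbound n).
  assert (Hp : (0 < 2 ^ Z.of_nat n)%Z) by (apply Z.pow_pos_nonneg; lia).
  assert (Z.of_nat (length (Ln n)) <= 2 ^ Z.of_nat (ell n))%Z by nia.
  apply Nat2Z.inj_le. rewrite Nat2Z.inj_pow. exact H1.
Qed.

Theorem corollary1 :
  exists g : nat -> R,
    little_o_n g /\
    forall n : nat, (1 <= n)%nat ->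
      exists enc : LLAVL_n n -> list bool,
        (forall t1 t2 : LLAVL_n n, enc t1 = enc t2 -> t1 = t2) /\
        (forall t : LLAVL_n n,
           (INR (length (enc t)) <= 5912 / 10000 * INR n + g n)%R).
Proof.
  exists (fun _ => 13). split.
  - intros eps Heps. destruct (INR_unbounded (13 / eps)) as [N HN]. exists N. intros n Hn.
    apply le_INR in Hn. rewrite Rabs_right by lra.
    assert (13 = eps * (13 / eps)) by (field; lra). nra.
  - intros n _.
    exists (fun t => bits (ell n) (idx (proj1_sig t) (Ln n))). split.
    + intros [t1 [A1 B1]] [t2 [A2 B2]] E. simpl in E.
      pose proof (idx_spec t1 (Ln n) (Ln_complete n t1 A1 B1)) as [I1 N1].
      pose proof (idx_spec t2 (Ln n) (Ln_complete n t2 A2 B2)) as [I2 N2].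
      pose proof (len_bound n).
      apply bits_inj in E; try lia.
      assert (t1 = t2) by (rewrite <- N1, <- N2, E; reflexivity). subst t2.
      f_equal. apply proof_irrelevance.
    + intros t. rewrite bits_len. unfold ell.
      pose proof (Nat.mul_div_le n 17 ltac:(lia)) as D. apply le_INR in D.
      rewrite mult_INR in D. rewrite !plus_INR, mult_INR, plus_INR.
      pose proof (pos_INR (n / 17)). simpl INR in *. lra.
Qed.
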